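(* Let $R$ be an associative ring and let $X$ be a finite set of unknowns. Consider a finite system of equations over $R$, each of the form $\sum_i\prod_j c_{ij}x_{ij}^{k_{ij}}=0$ (finitely many summands, called monomials, each a finite product) with $c_{ij}\in R$, $x_{ij}\in X$, $k_{ij}\in\mathbb{Z}$. If $$\sum_{\text{equations}}\big((\text{number of monomials in the equation})-1\big)<|X|,$$ then the system is generalised homogeneous.
   Context: A system of such equations is generalised homogeneous if there is a nonzero map $\deg: X\to\mathbb{Z}$ such that, for each equation, the value $\sum_j k_{ij}\deg(x_{ij})$ (the degree of the $i$-th monomial) does not depend on $i$ (the common value may differ from equation to equation, but the same map $\deg$ is used for all equations). *)

(* Defs.v *)
From mathcomp Require Import all_boot all_order all_algebra.
Set Implicit Arguments. Unset Strict Implicit. Unset Printing Implicit Defensive.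
Import GRing.Theory Num.Theory.
Local Open Scope ring_scope.

(* A factor c * x^k of a monomial: (c, x, k) with c : R, x : X, k : int. *)
Definition factor (R : Type) (X : Type) := (R * X * int)%type.
Definition monomial (R X : Type) := seq (factor R X).
(* An equation  sum_i prod_j c_ij x_ij^k_ij = 0  is the list of its monomials. *)
Definition equation (R X : Type) := seq (monomial R X).
Definition eqsystem (R X : Type) := seq (equation R X).

Definition mon_degree (R X : Type) (deg : X -> int) (m : monomial R X) : int :=
  \sum_(f <- m) f.2 * deg f.1.2.

Definition gen_homogeneous (R X : eqType) (S : eqsystem R X) : Prop :=
  exists deg : X -> int, (exists x, deg x != 0) /\
    forall e, e \in S -> forall m1 m2, m1 \in e -> m2 \in e ->
      mon_degree deg m1 = mon_degree deg m2.

(* Main.v *)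
Require Import Defs.
From mathcomp Require Import all_boot all_order all_algebra.
From Stdlib Require List.
Import GRing.Theory Num.Theory.
Local Open Scope ring_scope.

Lemma nth_In_ex (T : Type) (d : T) (L : seq T) l : List.In l L ->
  exists j, (j < size L)%N /\ nth d L j = l.
Proof.
elim: L => //= a L IH [->|/IH [j [hj <-]]]; first by exists 0%N.
by exists j.+1.
Qed.

Lemma memIn (T : eqType) (x : T) s : x \in s -> List.In x s.
Proof. elim: s => //= a s IH; rewrite inE => /orP [/eqP ->|/IH]; tauto. Qed.

Lemma In_flat (T : Type) (s : seq (seq T)) t x :
  List.In t s -> List.In x t -> List.In x (flatten s).
Proof.
elim: s => //= a s IH [->|/IH H] hx; apply: List.in_or_app; tauto.
Qed.

Lemma linalg (X : finType) (L : seq (X -> rat)) : (size L < #|X|)%N ->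
  exists u : X -> rat, (exists x, u x != 0) /\
    forall l, List.In l L -> \sum_x l x * u x = 0.
Proof.
move=> hL.
pose A : 'M[rat]_(#|X|, size L) := \matrix_(i, j) nth (fun _ => 0) L j (enum_val i).
have : kermx A != 0.
  rewrite -mxrank_eq0 mxrank_ker -lt0n subn_gt0.
  exact: leq_ltn_trans (rank_leq_col A) hL.
case/rowV0Pn => v /sub_kermxP Hv vn0.
exists (fun x => v 0 (enum_rank x)); split.
  case: (boolP [exists x, v 0 (enum_rank x) != 0]) => [/existsP//|].
  rewrite negb_exists => /forallP H; case/negP: vn0; apply/eqP/rowP => j.
  rewrite !mxE; have := H (enum_val j); rewrite enum_valK.
  by move/negPn/eqP.
move=> l /(@nth_In_ex _ (fun _ : X => 0 : rat) L l) [j [hj <-]].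
have := congr1 (fun M : 'rV_(size L) => M 0 (Ordinal hj)) Hv.
rewrite !mxE => H; apply: (etrans _ H).
rewrite (reindex _ (onW_bij _ (enum_val_bij X))).
by apply: eq_bigr => i _; rewrite enum_valK mxE /= mulrC.
Qed.

Definition cf (R X : eqType) (m : monomial R X) (x : X) : rat :=
  \sum_(f <- m) (f.1.2 == x)%:R * (f.2)%:~R.
Arguments cf {R X}.

Lemma degree_cf (R : eqType) (X : finType) (deg : X -> int) (m : monomial R X) :
  (mon_degree deg m)%:~R = \sum_x cf m x * (deg x)%:~R :> rat.
Proof.
rewrite /mon_degree /cf; elim: m => [|f m IH].
  by rewrite big_nil; under eq_bigr do rewrite big_nil mul0r; rewrite big1.
rewrite big_cons rmorphD /= IH.
under [RHS]eq_bigr do rewrite big_cons mulrDl.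
rewrite big_split /=; congr (_ + _).
rewrite (bigD1 f.1.2) //= eqxx mul1r big1 ?addr0; first by rewrite rmorphM.
by move=> y /negbTE; rewrite eq_sym => ->; rewrite !mul0r.
Qed.

Definition forms (R X : eqType) (e : equation R X) : seq (X -> rat) :=
  match e with
  | [::] => [::]
  | m0 :: ms => [seq (fun x => cf m x - cf m0 x) | m <- ms]
  end.
Arguments forms {R X}.

Lemma size_forms (R X : eqType) (e : equation R X) : size (forms e) = (size e).-1.
Proof. by case: e => //= m0 ms; rewrite size_map. Qed.

Theorem mainTheorem8 (R : pzRingType) (X : finType) (S : eqsystem R X) :
  (\sum_(e <- S) (size e).-1 < #|X|)%N -> gen_homogeneous S.
Proof.
move=> hS.
pose L := flatten [seq forms e | e <- S].
have hL : (size L < #|X|)%N.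
  rewrite size_flatten /shape -map_comp sumnE big_map.
  by under eq_bigr do rewrite /= size_forms.
have [u [[x0 ux0] Hu]] := linalg _ _ hL.
pose deg x := numq (u x) * \prod_(y | y != x) denq (u y).
pose D := \prod_y ((denq (u y))%:~R : rat).
have degE x : (deg x)%:~R = u x * D.
  rewrite /deg /D rmorphM rmorph_prod /= [in RHS](bigD1 x) //= mulrA; congr (_ * _).
  by rewrite -{2}(divq_num_den (u x)) mulfVK // intr_eq0 denq_neq0.
exists deg; split.
  exists x0; rewrite /deg mulf_eq0 negb_or numq_eq0 ux0 /=.
  by rewrite prodf_seq_neq0; apply/allP => y _; apply/implyP => _; rewrite denq_neq0.
move=> e eS m1 m2 m1e m2e.
apply: (@intr_inj rat); rewrite !degree_cf.
under eq_bigr do rewrite degE mulrA.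
under [RHS]eq_bigr do rewrite degE mulrA.
rewrite -!mulr_suml; congr (_ * _).
case: e eS m1e m2e => // m0 ms eS.
suff H m : m \in m0 :: ms -> \sum_x cf m x * u x = \sum_x cf m0 x * u x.
  by move=> /H -> /H ->.
rewrite inE => /orP [/eqP -> //| mms].
apply/eqP; rewrite -subr_eq0 -sumrB; apply/eqP.
have Hu' := Hu (fun x => cf m x - cf m0 x).
suff : List.In (fun x => cf m x - cf m0 x) L.
  move=> /Hu' H; apply: etrans _ H; by apply: eq_bigr => x _; rewrite mulrBl.
apply: (@In_flat _ _ (forms (m0 :: ms))).
  by apply: List.in_map; apply: memIn.
by apply: List.in_map; apply: memIn.
Qed.
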